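(* Let $t_0\in\mathbb{R}$, $q_0\ge 0$, $\mu>0$, $\alpha>0$, let $X:[t_0,+\infty)\to[0,+\infty)$ be continuous, and let $q$ be the solution of $$q'(t)=X(t)-\Big[\mu+e^{-\alpha q(t)}\big(\min\{\mu,X(t)\}-\mu\big)\Big],\qquad q(t_0)=q_0.$$ Define the exit time $\Lambda(t)=t+\dfrac{q(t)}{\mu}$. Then for all $t_0\le t<s$ we have $\Lambda(t)<\Lambda(s)$.
   Context: This ODE is the logistic queue model: $q$ is the queue size, $X$ the inflow, $\mu>0$ the maximum outflow rate and $\alpha>0$ a fixed model parameter. $\Lambda(t)$ is interpreted as the exit time of an entity arriving at time $t$. *)

(* Defs.v *)
From Stdlib Require Import Reals.
From Coquelicot Require Export Coquelicot.
Open Scope R_scope.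

Definition queue_rhs (mu alpha x qv : R) : R :=
  x - (mu + exp (- alpha * qv) * (Rmin mu x - mu)).

Definition exit_time (mu : R) (q : R -> R) (t : R) : R := t + q t / mu.

(* Main.v *)
Require Import Defs.
From Stdlib Require Import Reals Lra Psatz.
From Coquelicot Require Import Coquelicot.
Open Scope R_scope.

Lemma rhs_pos (mu alpha x qv : R) : 0 < mu -> 0 <= x ->
  0 < 1 + queue_rhs mu alpha x qv / mu.
Proof.
  intros Hmu Hx. unfold queue_rhs.
  assert (HE : 0 < exp (- alpha * qv)) by apply exp_pos.
  assert (H : 0 < mu + (x - (mu + exp (- alpha * qv) * (Rmin mu x - mu)))).
  { unfold Rmin; destruct (Rle_dec mu x); nra. }
  replace (1 + (x - (mu + exp (- alpha * qv) * (Rmin mu x - mu))) / mu)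
    with ((mu + (x - (mu + exp (- alpha * qv) * (Rmin mu x - mu)))) / mu)
    by (field; lra).
  apply Rdiv_lt_0_compat; lra.
Qed.

Theorem mainTheorem5 (t0 q0 mu alpha : R) (X q : R -> R)
  (Hq0 : 0 <= q0) (Hmu : 0 < mu) (Halpha : 0 < alpha)
  (* X : [t0,+oo) -> [0,+oo) continuous *)
  (HXnn : forall t, t0 <= t -> 0 <= X t)
  (HXc : forall t, t0 < t -> continuous X t)
  (HXc0 : filterlim X (at_right t0) (locally (X t0)))
  (* q solves the ODE on [t0,+oo) with q(t0) = q0 *)
  (Hinit : q t0 = q0)
  (Hq_cont0 : filterlim q (at_right t0) (locally (q t0)))
  (Hode : forall t, t0 < t -> is_derive q t (queue_rhs mu alpha (X t) (q t))) :
  forall t s, t0 <= t -> t < s -> exit_time mu q t < exit_time mu q s.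
Proof.
  assert (Hder : forall t, t0 < t -> is_derive (exit_time mu q) t
      (1 + queue_rhs mu alpha (X t) (q t) / mu)).
  { intros t Ht. unfold exit_time.
    assert (H1 : is_derive (fun x : R => x) t 1) by (apply (is_derive_id (K:=R_AbsRing))).
    assert (H2 := is_derive_scal_l q t _ (/ mu) (Hode t Ht)).
    assert (H3 := is_derive_plus _ _ t _ _ H1 H2).
    replace (1 + queue_rhs mu alpha (X t) (q t) / mu) with
      (plus 1 (scal (queue_rhs mu alpha (X t) (q t)) (/ mu))).
    2: { unfold plus, scal; simpl; unfold mult; simpl. unfold Rdiv. ring. }
    eapply is_derive_ext; [|exact H3]. intros y; simpl.
    unfold plus, scal; simpl; unfold mult; simpl. unfold Rdiv. ring. }
  assert (Hint : forall a b, t0 < a -> a < b -> exit_time mu q a < exit_time mu q b).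
  { intros a b Ha Hab.
    destruct (MVT_gen (exit_time mu q) a b
      (fun t => 1 + queue_rhs mu alpha (X t) (q t) / mu)) as [c [Hc Heq]].
    - intros x Hx. apply Hder. rewrite Rmin_left in Hx by lra. lra.
    - intros x Hx. rewrite Rmin_left in Hx by lra.
      apply continuity_pt_filterlim. apply (ex_derive_continuous (K:=R_AbsRing) (V:=R_NormedModule) (exit_time mu q)).
      eexists. apply Hder. lra.
    - rewrite Rmin_left, Rmax_right in Hc by lra.
      assert (Hp := rhs_pos mu alpha (X c) (q c) Hmu (HXnn c ltac:(lra))).
      nra. }
  intros t s Ht Hts.
  destruct (Rle_lt_or_eq_dec _ _ Ht) as [Ht'|Ht']; [now apply Hint|].
  subst t.
  set (m := (t0 + s) / 2).
  assert (Hms : exit_time mu q m < exit_time mu q s) by (apply Hint; unfold m; lra).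
  enough (exit_time mu q t0 <= exit_time mu q m) by lra.
  apply Rnot_lt_le. intros Hc.
  set (eps := exit_time mu q t0 - exit_time mu q m).
  assert (Heps : 0 < eps * mu / 2).
  { apply Rmult_lt_0_compat; [|lra]. unfold eps; nra. }
  destruct (Hq_cont0 (fun y => ball (q t0) (mkposreal _ Heps) y)
    (locally_ball _ _)) as [d Hd].
  assert (Hd2 : 0 < d) by apply cond_pos.
  assert (Hr0 : 0 < Rmin (d / 2) (Rmin (eps / 2) ((m - t0) / 2))).
  { apply Rmin_glb_lt; [lra|]. assert (0 < eps) by (unfold eps; lra). assert (t0 < m) by (unfold m; lra). apply Rmin_glb_lt; lra. }
  assert (Hr1 := Rmin_l (d / 2) (Rmin (eps / 2) ((m - t0) / 2))).
  assert (Hr2 := Rmin_r (d / 2) (Rmin (eps / 2) ((m - t0) / 2))).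
  assert (Hr3 := Rmin_l (eps / 2) ((m - t0) / 2)).
  assert (Hr4 := Rmin_r (eps / 2) ((m - t0) / 2)).
  set (r := Rmin (d / 2) (Rmin (eps / 2) ((m - t0) / 2))) in *.
  set (u := t0 + r).
  assert (Hu1 : t0 < u) by (unfold u; lra).
  assert (Hu2 : u - t0 <= d / 2) by (unfold u; lra).
  assert (Hu3 : u - t0 <= eps / 2) by (unfold u; lra).
  assert (Hu4 : u - t0 <= (m - t0) / 2) by (unfold u; lra).
  assert (Hqu : ball (q t0) (mkposreal _ Heps) (q u)).
  { apply Hd; [|exact Hu1].
    unfold ball; simpl; unfold AbsRing_ball, abs, minus, plus, opp; simpl.
    rewrite Rabs_right; lra. }
  unfold ball in Hqu; simpl in Hqu; unfold AbsRing_ball, abs, minus, plus, opp in Hqu;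
    simpl in Hqu.
  apply Rabs_def2 in Hqu.
  assert (Hum : exit_time mu q u < exit_time mu q m) by (apply Hint; unfold m in *; lra).
  unfold exit_time in *. unfold eps in *.
  assert (q t0 / mu - q u / mu < eps / 2).
  { unfold eps. replace (q t0 / mu - q u / mu) with ((q t0 - q u) / mu) by (field; lra).
    apply Rmult_lt_reg_r with mu; [lra|].
    unfold Rdiv. rewrite Rmult_assoc, Rinv_l by lra. lra. }
  unfold eps in H. lra.
Qed.
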